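(* Let $p\ge2$, $m\in\mathbb{N}$, $a,b>0$, $\beta\in\mathbb{R}^p$, and consider the multiple regression function $f(x)=(1,x^T)^T$ for $x\in\mathbb{R}^{p-1}$. Let $x_1,\ldots,x_p\in\mathbb{R}^{p-1}$ be such that $f(x_1),\ldots,f(x_p)$ are linearly independent, let $c\in\mathbb{R}$ with $f(x_j)^T\beta=c$ for $j=1,\ldots,p-1$, and assume $f(x_p)^T\beta>c$. Among all designs $\xi$ supported on $\{x_1,\ldots,x_p\}$ with weights $w_1,\ldots,w_p$, the weights maximizing $\det(M(\xi;\beta))$ are $$w_p^*=\frac{2}{p+\sqrt{(p-2)^2+4(p-1)\dfrac{1+\frac{m}{b}\exp(f(x_p)^T\beta)}{1+\frac{m}{b}\exp(c)}}},\qquad w_1^*=\cdots=w_{p-1}^*=\frac{1-w_p^*}{p-1},$$ and these weights satisfy $0<w_p^*<\frac1p<w_1^*=\cdots=w_{p-1}^*<\frac{1}{p-1}$.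
   Context: A design $\xi$ is a probability measure with finite support $x_1,\ldots,x_l$ and weights $w_1,\ldots,w_l\ge0$, $\sum_j w_j=1$. The Poisson information matrix is $M_{Po}(\xi;\beta)=\sum_{j=1}^l w_j\exp(f(x_j)^T\beta)f(x_j)f(x_j)^T$, and the Poisson–Gamma information matrix is $M(\xi;\beta)=\frac{a}{b}\Bigl(M_{Po}(\xi;\beta)-\frac{M_{Po}(\xi;\beta)e_1e_1^TM_{Po}(\xi;\beta)}{e_1^TM_{Po}(\xi;\beta)e_1+b/m}\Bigr)$, where $e_1$ is the first standard unit vector of $\mathbb{R}^p$. *)

(* Defs.v *)
From HB Require Import structures.
From mathcomp Require Import all_boot all_order all_algebra.
From mathcomp Require Import reals sequences exp.
Set Implicit Arguments. Unset Strict Implicit. Unset Printing Implicit Defensive.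
Import Order.TTheory GRing.Theory Num.Theory.
Local Open Scope ring_scope.

(* Throughout, the dimension p of the parameter is written n.+1
   (so x ranges over R^(p-1) = 'cV_n and f(x), beta live in 'cV_(n.+1)). *)
Section Defs.
Variable R : realType.
Variable n : nat.

Definition regf (x : 'cV[R]_n) : 'cV[R]_(n.+1) := col_mx (const_mx 1 : 'cV[R]_1) x.

Definition linpred (x : 'cV[R]_n) (beta : 'cV[R]_(n.+1)) : R :=
  ((regf x)^T *m beta) 0 0.

Definition e1 : 'cV[R]_(n.+1) := delta_mx 0 0.

Definition M_Po (l : nat) (x : 'I_l -> 'cV[R]_n) (w : 'I_l -> R)
  (beta : 'cV[R]_(n.+1)) : 'M[R]_(n.+1) :=
  \sum_(j < l) (w j * expR (linpred (x j) beta)) *: (regf (x j) *m (regf (x j))^T).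

Definition M_PG (a b : R) (m : nat) (l : nat) (x : 'I_l -> 'cV[R]_n)
  (w : 'I_l -> R) (beta : 'cV[R]_(n.+1)) : 'M[R]_(n.+1) :=
  let MP := M_Po x w beta in
  (a / b) *: (MP - ((e1^T *m MP *m e1) 0 0 + b / m%:R)^-1 *:
                     (MP *m e1 *m e1^T *m MP)).

Definition is_design_weights (l : nat) (w : 'I_l -> R) : Prop :=
  (forall j, 0 <= w j) /\ \sum_(j < l) w j = 1.

Definition wp_star (b : R) (m : nat) (c etap : R) : R :=
  let p : R := (n.+1)%:R in
  2 / (p + Num.sqrt ((p - 2) ^+ 2 + 4 * (p - 1) *
        ((1 + m%:R / b * expR etap) / (1 + m%:R / b * expR c)))).

Definition w_star (b : R) (m : nat) (c etap : R) (j : 'I_(n.+1)) : R :=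
  if j == ord_max then wp_star b m c etap
  else (1 - wp_star b m c etap) / n%:R.

End Defs.

(* Main.v *)
Require Import Defs.
From HB Require Import structures.
From mathcomp Require Import all_boot all_order all_algebra.
From mathcomp Require Import reals sequences exp.
From mathcomp Require Import ring lra.
Import Order.TTheory GRing.Theory Num.Theory.
Local Open Scope ring_scope.


Section Key.
Variable R : realType.

Lemma ln_le_sub1 (y : R) : 0 < y -> ln y <= y - 1.
Proof.
move=> y0; have := expR_ge1Dx (ln y); rewrite lnK ?posrE //; lra.
Qed.

Lemma ln_lt_sub1 (y : R) : 0 < y -> y != 1 -> ln y < y - 1.
Proof.
move=> y0 y1; have : ln y != 0 by rewrite ln_eq0.
move/expR_gt1Dx; rewrite lnK ?posrE //; lra.
Qed.

Lemma key (p : nat) (k : R) (mu ws w : 'I_p -> R) :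
  0 < k ->
  (forall j, 0 < ws j) -> (forall j, 0 < mu j) -> (forall j, 0 < w j) ->
  \sum_j w j = 1 -> \sum_j ws j = 1 ->
  (forall j, ws j * (k + mu j / \sum_i (mu i * ws i)) = 1) ->
  (\prod_j w j) * \sum_i (mu i * ws i) <= (\prod_j ws j) * \sum_i (mu i * w i)
  /\ ((exists j, w j != ws j) ->
  (\prod_j w j) * \sum_i (mu i * ws i) < (\prod_j ws j) * \sum_i (mu i * w i)).
Proof.
move=> k0 ws0 mu0 w0 sw sws kkt.
set Ls := \sum_i (mu i * ws i); set L := \sum_i (mu i * w i).
case: p mu ws w ws0 mu0 w0 sw sws kkt @Ls @L => [|p] mu ws w ws0 mu0 w0 sw sws kkt Ls L.
  by move: sws; rewrite big_ord0 => /eqP; rewrite eq_sym oner_eq0.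
have sgt0 : forall f : 'I_p.+1 -> R, (forall j, 0 < f j) -> 0 < \sum_j f j.
  move=> f f0; rewrite big_ord_recl; apply: ltr_pwDl => //.
  by apply: sumr_ge0 => j _; apply: ltW.
have Ls0 : 0 < Ls by apply: sgt0 => j; apply: mulr_gt0.
have L0 : 0 < L by apply: sgt0 => j; apply: mulr_gt0.
pose z j := w j / ws j.
have z0 j : 0 < z j by apply: divr_gt0.
pose bb j := mu j * ws j / Ls.
have kb j : k * ws j + bb j = 1.
  by have := kkt j; rewrite /bb => <-; ring.
have sb : \sum_j bb j = 1 by rewrite /bb -mulr_suml mulfV //; apply/lt0r_neq0.
have s1 : \sum_j ws j * (z j - 1) = 0.
  rewrite (eq_bigr (fun j => w j - ws j)) ?sumrB ?sw ?sws ?subrr // => j _.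
  by rewrite /z; field; apply/lt0r_neq0.
pose q := L / Ls.
have q0 : 0 < q by apply: divr_gt0.
have zq0 j : 0 < z j / q by apply: divr_gt0.
have s2 : \sum_j bb j * (z j / q - 1) = 0.
  rewrite (eq_bigr (fun j => mu j * w j / L - bb j)); last first.
    by move=> j _; rewrite /bb /z /q; field; do ! (apply/andP; split); apply/lt0r_neq0.
  by rewrite sumrB -mulr_suml mulfV ?sb ?subrr //; apply/lt0r_neq0.
have lnzq j : ln (z j / q) = ln (z j) - ln q by rewrite ln_div ?posrE.
have ident : \sum_j ln (z j) - ln q =
   k * \sum_j ws j * (ln (z j) - (z j - 1)) +
   \sum_j bb j * (ln (z j / q) - (z j / q - 1)).
  rewrite mulr_sumr -big_split /=.
  rewrite [X in _ = X](eq_bigr (fun j => ln (z j) - (k * (ws j * (z j - 1)) + bb j * ln q + bb j * (z j / q - 1)))); last first.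
    move=> j _; rewrite lnzq; have -> : bb j = 1 - k * ws j by have := kb j; lra.
    ring.
  rewrite sumrB !big_split /= -!mulr_sumr s1 s2 -mulr_suml sb; ring.
have T1 : \sum_j ws j * (ln (z j) - (z j - 1)) <= 0.
  apply: sumr_le0 => j _; rewrite pmulr_rle0 //; have := @ln_le_sub1 _ (z0 j); lra.
have T2 : \sum_j bb j * (ln (z j / q) - (z j / q - 1)) <= 0.
  apply: sumr_le0 => j _; rewrite pmulr_rle0 ?divr_gt0 ?mulr_gt0 //.
  have := @ln_le_sub1 _ (zq0 j); lra.
have fin : \sum_j ln (z j) <= ln q -> (\prod_j w j) * Ls <= (\prod_j ws j) * L.
  move=> H; have H2 : expR (\sum_j ln (z j)) <= expR (ln q) by rewrite ler_expR.
  move: H2; rewrite expR_sum lnK ?posrE //.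
  rewrite (eq_bigr (fun j => z j)); last by move=> j _; rewrite lnK ?posrE.
  rewrite /z prodf_div /q ler_pdivrMr ?prodr_gt0 // => H3.
  by rewrite -ler_pdivlMr // -mulrA mulrC.
have fins : \sum_j ln (z j) < ln q -> (\prod_j w j) * Ls < (\prod_j ws j) * L.
  move=> H; have H2 : expR (\sum_j ln (z j)) < expR (ln q) by rewrite ltr_expR.
  move: H2; rewrite expR_sum lnK ?posrE //.
  rewrite (eq_bigr (fun j => z j)); last by move=> j _; rewrite lnK ?posrE.
  rewrite /z prodf_div /q ltr_pdivrMr ?prodr_gt0 // => H3.
  by rewrite -ltr_pdivlMr // -mulrA mulrC.
have T1' := T1; rewrite -(pmulr_rle0 _ k0) in T1'.
split.
  by apply: fin; rewrite -subr_le0 ident; lra.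
case=> j0 hj0; apply: fins; rewrite -subr_lt0 ident.
have T1s : \sum_j ws j * (ln (z j) - (z j - 1)) < 0.
  rewrite (bigD1 j0) //=.
  have : \sum_(j | j != j0) ws j * (ln (z j) - (z j - 1)) <= 0.
    apply: sumr_le0 => j _; rewrite pmulr_rle0 //; have := @ln_le_sub1 _ (z0 j); lra.
  have : ws j0 * (ln (z j0) - (z j0 - 1)) < 0.
    rewrite pmulr_rlt0 //.
    have : z j0 != 1.
      apply: contra hj0; rewrite /z => /eqP h; apply/eqP.
      by move: h; move/(congr1 (fun t => t * ws j0)); rewrite mul1r divfK // lt0r_neq0.
    move=> /(@ln_lt_sub1 _ (z0 j0)); lra.
  lra.
rewrite -(pmulr_rlt0 _ k0) in T1s; lra.
Qed.
End Key.


Section Det.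
Variable R : realType.
Variable n : nat.

Lemma regf00 (x : 'cV[R]_n) : regf x 0 0 = 1.
Proof.
rewrite /regf mxE; case: splitP => [i _|i /= hi]; first by rewrite mxE.
by move: hi; rewrite add1n.
Qed.

Lemma det_rank1 (A : 'M[R]_(n.+1)) (s : R) :
  \det (A - s^-1 *: (A *m e1 R n *m (e1 R n)^T *m A)) = \det A * (1 - s^-1 * A 0 0).
Proof.
have -> : A - s^-1 *: (A *m e1 R n *m (e1 R n)^T *m A) =
   A *m (1%:M - s^-1 *: (delta_mx 0 0 *m A)).
  by rewrite mulmxBr mulmx1 -!scalemxAr !mulmxA /e1 trmx_delta -(mulmxA A) mul_delta_mx.
rewrite det_mulmx; congr (_ * _).
rewrite -det_tr det_trig.
  rewrite big_ord_recl big1 ?mulr1.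
    by rewrite !mxE eqxx mulr1n big_ord_recl big1 ?mxE ?eqxx /= ?mulr1 ?addr0 ?mul1r // => i _; rewrite !mxE /= mul0r.
  move=> i _; rewrite !mxE /= eqxx mulr1n.
  rewrite big1 ?mulr0 ?subr0 // => j _; rewrite !mxE.
  by rewrite eq_sym (negbTE (neq_lift _ _)) mul0r.
apply/is_trig_mxP => i j lij; rewrite !mxE.
have -> : (j == i) = false by apply/negbTE; rewrite neq_ltn lij orbT.
have -> : \sum_k delta_mx (0 : 'I_n.+1) (0 : 'I_n.+1) j k * A k i = 0.
  rewrite big1 // => k _; rewrite mxE.
  have -> : (j == 0) = false by apply/negbTE/eqP => j0; move: lij; rewrite j0 ltn0.
  by rewrite mul0r.
by rewrite mulr0 subr0.
Qed.

Definition Fm (x : 'I_n.+1 -> 'cV[R]_n) : 'M[R]_(n.+1) :=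
  \matrix_(j < n.+1) (regf (x j))^T.

Lemma MPo_fact (x : 'I_n.+1 -> 'cV[R]_n) w beta :
  M_Po x w beta = (Fm x)^T *m diag_mx (\row_j (w j * expR (linpred (x j) beta))) *m Fm x.
Proof.
apply/matrixP => i k; rewrite /M_Po summxE !mxE.
apply: eq_bigr => j _; rewrite mul_mx_diag !mxE big_ord1 !mxE.
by rewrite mulrA; congr (_ * _); exact: mulrC.
Qed.

Lemma det_MPo (x : 'I_n.+1 -> 'cV[R]_n) w beta :
  \det (M_Po x w beta) = \det (Fm x) ^+ 2 * \prod_j (w j * expR (linpred (x j) beta)).
Proof.
rewrite MPo_fact !det_mulmx det_tr det_diag.
under eq_bigr do rewrite mxE.
ring.
Qed.

Lemma MPo00 (x : 'I_n.+1 -> 'cV[R]_n) w beta :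
  M_Po x w beta 0 0 = \sum_j (w j * expR (linpred (x j) beta)).
Proof.
rewrite /M_Po summxE; apply: eq_bigr => j _.
rewrite mxE [(_ *m _) _ _]mxE big_ord1 [(regf _)^T _ _]mxE regf00.
by rewrite !mulr1.
Qed.

Lemma e1Ae1 (A : 'M[R]_(n.+1)) : ((e1 R n)^T *m A *m e1 R n) 0 0 = A 0 0.
Proof.
by rewrite /e1 trmx_delta -rowE -colE !mxE.
Qed.

Lemma det_PG (a b : R) (m : nat) (x : 'I_n.+1 -> 'cV[R]_n) w beta :
  \det (M_PG a b m x w beta) =
  (a / b) ^+ n.+1 * (\det (Fm x) ^+ 2 * \prod_j (w j * expR (linpred (x j) beta))) *
  (1 - (\sum_j (w j * expR (linpred (x j) beta)) + b / m%:R)^-1 *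
        \sum_j (w j * expR (linpred (x j) beta))).
Proof.
rewrite /M_PG detZ e1Ae1 -!mulmxA (mulmxA (e1 R n)) !mulmxA det_rank1 det_MPo MPo00.
by rewrite mulrA.
Qed.
End Det.
Arguments Fm {R n} x.


Lemma sum_split (R : realType) (n : nat) (f : 'I_n.+1 -> R) (A : R) :
  (forall j, j != ord_max -> f j = A) -> \sum_(j < n.+1) f j = n%:R * A + f ord_max.
Proof.
move=> hf; rewrite big_ord_recr /=; congr (_ + _).
rewrite (eq_bigr (fun _ => A)) ?sumr_const ?card_ord ?mulr_natl // => i _.
by apply: hf; rewrite -val_eqE /= neq_ltn ltn_ord.
Qed.

Theorem theorem7 (R : realType) (n : nat) (hn : (1 <= n)%N) (m : nat)
  (hm : (0 < m)%N) (a b : R) (ha : 0 < a) (hb : 0 < b)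
  (beta : 'cV[R]_(n.+1)) (x : 'I_(n.+1) -> 'cV[R]_n) (c : R)
  (hind : row_free (\matrix_(j < n.+1) (regf (x j))^T))
  (hc : forall j : 'I_(n.+1), j != ord_max -> linpred (x j) beta = c)
  (hp : c < linpred (x ord_max) beta) :
  let ws := w_star b m c (linpred (x ord_max) beta) in
  let wp := wp_star n b m c (linpred (x ord_max) beta) in
  [/\ is_design_weights ws,
      (forall w : 'I_(n.+1) -> R, is_design_weights w ->
         \det (M_PG a b m x w beta) <= \det (M_PG a b m x ws beta)),
      (forall w : 'I_(n.+1) -> R, is_design_weights w ->
         \det (M_PG a b m x w beta) = \det (M_PG a b m x ws beta) ->
         forall j, w j = ws j),
      0 < wp /\ wp < 1 / (n.+1)%:R &
      (forall j : 'I_(n.+1), j != ord_max ->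
         1 / (n.+1)%:R < ws j /\ ws j < 1 / n%:R)].
Proof.
move=> ws wp.
set eta := linpred (x ord_max) beta.
set N : R := n%:R.
have N0 : 0 < N by rewrite /N ltr0n.
have hp1 : (n.+1)%:R = N + 1 :> R by rewrite /N natr1.
have m0 : 0 < (m%:R : R) by rewrite ltr0n.
set kap := b / m%:R.
have kap0 : 0 < kap by apply: divr_gt0.
pose lam j := expR (linpred (x j) beta).
have lam0 j : 0 < lam j by apply: expR_gt0.
pose mu j := lam j + kap.
have mupos j : 0 < mu j by rewrite /mu; apply: ltr_pwDl => //; apply: ltW.
set mu0 := expR c + kap.
set nu := expR eta + kap.
have muE j : j != ord_max -> mu j = mu0 by move=> hj; rewrite /mu /lam hc.
have ecp : expR c < expR eta by rewrite ltr_expR.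
have ec0 : 0 < expR c by apply: expR_gt0.
set r := (1 + m%:R / b * expR eta) / (1 + m%:R / b * expR c).
have hr : nu = r * mu0.
  rewrite /nu /mu0 /r /kap; field.
  rewrite !lt0r_neq0 //; apply: ltr_pwDl => //; apply: mulr_ge0; apply: ltW => //.
have mu00 : 0 < mu0 by apply: ltr_pwDl => //; apply: ltW.
have r1 : 1 < r.
  have : mu0 < nu by rewrite /mu0 /nu; lra.
  by rewrite hr -ltr_pdivrMr // divff // lt0r_neq0.
set D := (N + 1 - 2) ^+ 2 + 4 * (N + 1 - 1) * r.
have D0 : 0 <= D by rewrite /D; apply: addr_ge0; [apply: sqr_ge0 | apply: mulr_ge0; [|lra]; lra].
set s := Num.sqrt D.
have s0 : 0 <= s by apply: sqrtr_ge0.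
have s2 : s ^+ 2 = D by apply: sqr_sqrtr.
have wpE : wp = 2 / (N + 1 + s) by rewrite /wp /wp_star /= hp1.
set t := wp in wpE *.
have ht : t * (N + 1 + s) = 2 by rewrite wpE mulfVK //; apply/lt0r_neq0; lra.
have t0 : 0 < t by rewrite wpE; apply: divr_gt0 => //; lra.
have sp : N + 1 < s.
  have hD : (N + 1) ^+ 2 < s ^+ 2 by rewrite s2 /D; nra.
  nra.
have tp : t * (N + 1) < 1 by nra.
have Q : N * (r - 1) * t ^+ 2 + (N + 1) * t - 1 = 0.
  have e : (N * (r - 1) * t ^+ 2 + (N + 1) * t - 1) * (N + 1 + s) ^+ 2 =
     N * (r - 1) * (t * (N + 1 + s)) ^+ 2 + (N + 1) * (t * (N + 1 + s)) * (N + 1 + s) - (N + 1 + s) ^+ 2 by ring.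
  rewrite ht in e.
  have e2 : N * (r - 1) * 2 ^+ 2 + (N + 1) * 2 * (N + 1 + s) - (N + 1 + s) ^+ 2 = 0.
    have -> : N * (r - 1) * 2 ^+ 2 + (N + 1) * 2 * (N + 1 + s) - (N + 1 + s) ^+ 2 =
      4 * N * (r - 1) + (N + 1) ^+ 2 - s ^+ 2 by ring.
    rewrite s2 /D; ring.
  rewrite e2 in e; move/eqP: e; rewrite mulf_eq0 => /orP[/eqP // |].
  rewrite sqrf_eq0 => /eqP; lra.
have wsE j : ws j = if j == ord_max then t else (1 - t) / N by [].
set Ls := \sum_i (mu i * ws i).
have LsE : Ls = mu0 * (1 - t) + nu * t.
  rewrite /Ls (@sum_split R n _ (mu0 * ((1 - t) / N))); last first.
    by move=> j hj; rewrite muE // wsE (negbTE hj).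
  rewrite wsE eqxx /mu /lam -/eta -/nu -/N; field; exact: lt0r_neq0 N0.
have Ls0 : 0 < Ls.
  have t1 : 0 < 1 - t by nra.
  have nu0 : 0 < nu by rewrite /nu; lra.
  rewrite LsE; have := mulr_gt0 mu00 t1; have := mulr_gt0 nu0 t0; lra.
have E1 : (1 - t) * mu0 = N * t * Ls.
  apply/eqP; rewrite -subr_eq0; apply/eqP.
  rewrite LsE hr; transitivity (- mu0 * (N * (r - 1) * t ^+ 2 + (N + 1) * t - 1)); first by ring.
  by rewrite Q mulr0.
have E2 : t * nu = (1 - N * t) * Ls.
  apply/eqP; rewrite -subr_eq0; apply/eqP.
  rewrite LsE hr; transitivity (mu0 * (N * (r - 1) * t ^+ 2 + (N + 1) * t - 1)); first by ring.
  by rewrite Q mulr0.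
have kkt j : ws j * (N + mu j / Ls) = 1.
  rewrite wsE; case: eqP => [-> | /eqP hj].
    have -> : t * (N + mu ord_max / Ls) = N * t + (t * nu) / Ls.
      rewrite /mu /lam -/eta -/nu; field; apply/lt0r_neq0 => //.
    by rewrite E2 mulfK ?lt0r_neq0 //; ring.
  rewrite muE //.
  have -> : (1 - t) / N * (N + mu0 / Ls) = (1 - t) + ((1 - t) * mu0) / (N * Ls).
    by field; rewrite !lt0r_neq0.
  rewrite E1 (_ : N * t * Ls / (N * Ls) = t); first ring.
  by field; rewrite !lt0r_neq0.
have Fdet : \det (Fm x) != 0.
  have : Fm x \in unitmx by rewrite -row_free_unit.
  by rewrite unitmxE unitfE.
set K := (a / b) ^+ n.+1 * \det (Fm x) ^+ 2 * \prod_j lam j * kap.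
have K0 : 0 < K.
  apply: mulr_gt0 => //; apply: mulr_gt0; last by apply: prodr_gt0.
  apply: mulr_gt0; first by apply: exprn_gt0; apply: divr_gt0.
  by rewrite lt_def sqrf_eq0 Fdet sqr_ge0.
have SLg w : is_design_weights w ->
    \sum_j (w j * expR (linpred (x j) beta)) + kap = \sum_i (mu i * w i).
  move=> [w0 sw].
  rewrite /mu /lam; under [RHS]eq_bigr do rewrite mulrDl.
  rewrite big_split /= -mulr_sumr sw mulr1; congr (_ + _).
  by apply: eq_bigr => j _; rewrite mulrC.
have Lpos w : is_design_weights w -> 0 < \sum_i (mu i * w i).
  move=> hw; have S0 : 0 <= \sum_j (w j * expR (linpred (x j) beta)).
    by apply: sumr_ge0 => j _; apply: mulr_ge0; [case: hw | apply: expR_ge0].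
  by rewrite -SLg //; lra.
have detE w : is_design_weights w ->
    \det (M_PG a b m x w beta) = K * (\prod_j w j / \sum_i (mu i * w i)).
  move=> hw; have SL := SLg w hw; have L0 := Lpos w hw.
  rewrite det_PG -/kap SL big_split /=.
  have -> : \sum_j (w j * expR (linpred (x j) beta)) = \sum_i (mu i * w i) - kap by rewrite -SL; ring.
  rewrite /K /lam; field; exact: lt0r_neq0.
have wsd : is_design_weights ws.
  split.
    move=> j; rewrite wsE; case: eqP => _; first by apply: ltW.
    by apply: divr_ge0; [nra | apply: ltW].
  rewrite (@sum_split R n _ ((1 - t) / N)); last by move=> j hj; rewrite wsE (negbTE hj).
  rewrite wsE eqxx; field; exact: lt0r_neq0.
have ws0 j : 0 < ws j.
  rewrite wsE; case: eqP => _ //; apply: divr_gt0 => //; nra.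
have detws : \det (M_PG a b m x ws beta) = K * (\prod_j ws j / Ls) by rewrite detE.
have Gws : 0 < \prod_j ws j / Ls by apply: divr_gt0 => //; apply: prodr_gt0.
have cmp w : is_design_weights w ->
   (\prod_j w j / \sum_i (mu i * w i) <= \prod_j ws j / Ls) /\
   (\prod_j w j / \sum_i (mu i * w i) = \prod_j ws j / Ls -> forall j, w j = ws j).
  move=> [w0 sw].
  have L0 := Lpos w (conj w0 sw).
  have hdiv : forall u v : R, (u / \sum_i (mu i * w i) <= v / Ls) = (u * Ls <= v * \sum_i (mu i * w i)).
    by move=> u v; rewrite ler_pdivrMr // mulrAC ler_pdivlMr.
  have hdivs : forall u v : R, (u / \sum_i (mu i * w i) < v / Ls) = (u * Ls < v * \sum_i (mu i * w i)).
    by move=> u v; rewrite ltr_pdivrMr // mulrAC ltr_pdivlMr.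
  case: (boolP [forall j, 0 < w j]) => [/forallP wpos | /forallPn [j hj]].
    have [le lt] := @key _ _ _ _ _ _ N0 ws0 mupos wpos sw wsd.2 kkt.
    split; first by rewrite hdiv.
    move=> heq j; apply/eqP; apply: contraT => hne.
    have := lt (ex_intro _ j hne); rewrite -hdivs heq ltxx //.
  have wj0 : w j = 0.
    by apply/eqP; rewrite eq_le w0 andbT leNgt.
  have -> : \prod_j w j = 0 by rewrite (bigD1 j) //= wj0 mul0r.
  rewrite mul0r; split; first by apply: ltW.
  by move=> h; move: Gws; rewrite -h ltxx.
split => //.
- move=> w hw; rewrite detE // detws ler_pM2l //; exact: (cmp w hw).1.
- move=> w hw; rewrite detE // detws => /(mulfI (lt0r_neq0 K0)); exact: (cmp w hw).2.
- split => //; rewrite hp1 ltr_pdivlMr; last lra.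
  exact: tp.
- move=> j hj; rewrite wsE (negbTE hj) hp1; split.
    rewrite ltr_pdivrMr; last lra.
    by rewrite mulrAC ltr_pdivlMr // mul1r; nra.
  by rewrite ltr_pM2r ?invr_gt0 //; lra.
Qed.
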